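(* For all integers $n>1$ and $i\ge1$, and every primitive $n$-th root of unity $\omega_n$, $S_n(\omega_n^i)=S_{\gcd(s_n,i)}(1)$ and $G_n(\omega_n^i)=G_{\gcd(g_n,i)}(1)$.
   Context: $\Phi_k(q)$ is the $k$-th cyclotomic polynomial. For $n>1$ let $s_n$ be the smallest prime factor of $n$ and $g_n$ the greatest prime factor of $n$. Define $S_1(q)=G_1(q)=\Phi_1(q)=q-1$, and for $n>1$, $S_n(q)=\Phi_{s_n}(q^{n/s_n})$ and $G_n(q)=\Phi_{g_n}(q^{n/g_n})$. *)

(* Defs.v *)
From mathcomp Require Import all_boot all_order all_algebra all_field.
Set Implicit Arguments. Unset Strict Implicit. Unset Printing Implicit Defensive.
Import Order.TTheory GRing.Theory Num.Theory.
Local Open Scope ring_scope.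

Definition Phi (k : nat) (q : algC) : algC := (map_poly intr 'Phi_k).[q].

(* s_n = pdiv n (smallest prime factor), g_n = max_pdiv n (greatest). *)
Definition S (n : nat) (q : algC) : algC :=
  if n == 1%N then Phi 1 q else Phi (pdiv n) (q ^+ (n %/ pdiv n)).

Definition G (n : nat) (q : algC) : algC :=
  if n == 1%N then Phi 1 q else Phi (max_pdiv n) (q ^+ (n %/ max_pdiv n)).

(* Main.v *)
Require Import Defs.
From mathcomp Require Import all_boot all_order all_algebra all_field.
Import GRing.Theory Num.Theory.
Local Open Scope ring_scope.

Lemma divisors_prime p : prime p -> perm_eq (divisors p) [:: 1%N; p].
Proof.
move=> pp; have p0 := prime_gt0 pp.
apply: uniq_perm; first exact: divisors_uniq.
  by rewrite /= inE andbT; case: p pp {p0} => [|[|p]].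
move=> d; rewrite -dvdn_divisors // !inE.
case: (d =P 1%N) => [->|/eqP d1]; first by rewrite dvd1n.
exact/(prime_nt_dvdP pp d1)/eqP.
Qed.

Lemma Phi1P : 'Phi_1 = 'X - 1.
Proof.
have := prod_Cyclotomic (ltn0Sn 0).
by rewrite (_ : divisors 1 = [:: 1%N]) // big_seq1 expr1.
Qed.

Lemma PhiP p : prime p -> 'Phi_p = \sum_(k < p) 'X^k.
Proof.
move=> pp; have := prod_Cyclotomic (prime_gt0 pp).
rewrite (perm_big _ (divisors_prime p pp)) /= big_cons big_seq1 Phi1P subrX1.
apply: mulfI.
by rewrite -polyC1 -size_poly_eq0 size_XsubC.
Qed.

Lemma PhiE p x : prime p -> Phi p x = \sum_(k < p) x ^+ k.
Proof.
move=> pp; rewrite /Phi PhiP // rmorph_sum horner_sum.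
by apply: eq_bigr => k _; rewrite rmorphXn /= map_polyX hornerXn.
Qed.

Lemma Phi11 : Phi 1 1 = 0.
Proof. by rewrite /Phi Phi1P rmorphB /= map_polyX rmorph1 !hornerE subrr. Qed.

Lemma key p n i (w : algC) : prime p -> (p %| n)%N -> n.-primitive_root w ->
  Phi p ((w ^+ i) ^+ (n %/ p)) = if (p %| i)%N then p%:R else 0.
Proof.
move=> pp pn wp; rewrite PhiE // -exprM.
have n0 := prim_order_gt0 wp.
have np0 : (0 < n %/ p)%N by rewrite divn_gt0 ?prime_gt0 // dvdn_leq.
have En : n = (p * (n %/ p))%N by rewrite mulnC divnK.
case: ifP => h.
  have -> : w ^+ (i * (n %/ p)) = 1.
    case/dvdnP: h => k ->; rewrite -mulnA -En mulnC exprM.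
    by rewrite (prim_expr_order wp) expr1n.
  by under eq_bigr do rewrite expr1n; by rewrite sumr_const card_ord.
set x := w ^+ _.
have x1 : x != 1.
  rewrite -(expr0 w) /x (eq_prim_root_expr wp) mod0n.
  apply/negP => /eqP hd.
  have : (n %| i * (n %/ p))%N by rewrite /dvdn hd.
  by rewrite {1}En dvdn_pmul2r // h.
have xp : x ^+ p = 1.
  by rewrite /x -exprM -mulnA (mulnC _ p) -En mulnC exprM (prim_expr_order wp) expr1n.
have := subrX1 x p; rewrite xp subrr => /esym/eqP.
by rewrite mulf_eq0 subr_eq0 (negbTE x1) /= => /eqP.
Qed.

Lemma S_prime p : prime p -> S p 1 = p%:R.
Proof.
move=> pp; rewrite /S pdiv_id // ifN; last by case: p pp => [|[|]].
rewrite expr1n PhiE // (eq_bigr (fun _ => 1)) ?sumr_const ?card_ord //.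
by move=> k _; rewrite expr1n.
Qed.

Lemma max_pdiv_id p : prime p -> max_pdiv p = p.
Proof. by move=> pp; rewrite /max_pdiv primes_prime. Qed.

Lemma G_prime p : prime p -> G p 1 = p%:R.
Proof.
move=> pp; rewrite /G max_pdiv_id // ifN; last by case: p pp => [|[|]].
rewrite expr1n PhiE // (eq_bigr (fun _ => 1)) ?sumr_const ?card_ord //.
by move=> k _; rewrite expr1n.
Qed.

Theorem theorem12 (n i : nat) (w : algC) :
  (1 < n)%N -> (1 <= i)%N -> n.-primitive_root w ->
  S n (w ^+ i) = S (gcdn (pdiv n) i) 1 /\
  G n (w ^+ i) = G (gcdn (max_pdiv n) i) 1.
Proof.
move=> n1 i1 wp.
have n1' : (n == 1%N) = false by case: n n1 {wp} => [|[|]].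
split.
  rewrite /S n1' key ?pdiv_dvd ?pdiv_prime //.
  have pp := pdiv_prime n1.
  case: ifP => h; first by rewrite -/(S _ _) (gcdn_idPl h) S_prime.
  by rewrite (eqP (_ : coprime _ _)) ?eqxx ?Phi11 // prime_coprime // h.
rewrite /G n1' key ?max_pdiv_dvd ?max_pdiv_prime //.
have pp := max_pdiv_prime n1.
case: ifP => h; first by rewrite -/(G _ _) (gcdn_idPl h) G_prime.
by rewrite (eqP (_ : coprime _ _)) ?eqxx ?Phi11 // prime_coprime // h.
Qed.
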